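(* Let $G=(V,E)$ be a finite simple graph on $n$ vertices with no isolated vertex. Let $G'$ be any graph with vertex set $V$ obtained as follows: for each vertex $v\in V$, if $\deg_G(v)\ge 2$, choose two distinct neighbors $u,w$ of $v$ in $G$ (arbitrarily) and put the edge $uw$ into $G'$; if $\deg_G(v)=1$, put a loop on the unique neighbor of $v$ into $G'$ (an edge already present is not duplicated). Then $$\gamma_t(G)\le n-\alpha(G')=\beta(G').$$
   Context: A set $S\subseteq V$ is a total dominating set of $G$ if every vertex $v\in V$ has a neighbor in $S$; $\gamma_t(G)$ is the minimum size of a total dominating set of $G$. For a graph $H$ possibly with loops, an independent set is a set of vertices containing no two endpoints of an edge and no vertex carrying a loop, and $\alpha(H)$ is the maximum size of an independent set; a vertex cover is a set of vertices meeting every edge (so it contains every vertex carrying a loop), and $\beta(H)$ is the minimum size of a vertex cover. *)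

(* Defs.v *)
(* A finite simple graph on a finType V is a symmetric,
   irreflexive boolean relation e; graphs possibly with loops are arbitrary
   symmetric relations (a loop at x is  h x x). *)
From mathcomp Require Import all_boot.
Set Implicit Arguments. Unset Strict Implicit. Unset Printing Implicit Defensive.

Section Defs.
Variable V : finType.

Definition simple_graph (e : rel V) : Prop :=
  irreflexive e /\ symmetric e.

Definition nbhd (e : rel V) (v : V) : {set V} := [set u | e v u].
Definition deg (e : rel V) (v : V) : nat := #|nbhd e v|.

Definition total_dominating (e : rel V) (S : {set V}) : bool :=
  [forall v, exists u, (u \in S) && e v u].
Definition gamma_t (e : rel V) : nat :=
  \big[minn/#|V|]_(S : {set V} | total_dominating e S) #|S|.

Definition independent (h : rel V) (S : {set V}) : bool :=
  [forall x in S, forall y in S, ~~ h x y].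
Definition alpha (h : rel V) : nat :=
  \max_(S : {set V} | independent h S) #|S|.
Definition vertex_cover (h : rel V) (S : {set V}) : bool :=
  [forall x, forall y, h x y ==> (x \in S) || (y \in S)].
Definition beta (h : rel V) : nat :=
  \big[minn/#|V|]_(S : {set V} | vertex_cover h S) #|S|.

(* The graph G' built from choices p1 v, p2 v (for each vertex v):
   the edge {p1 v, p2 v}, which is a loop when p1 v = p2 v. *)
Definition Gprime (p1 p2 : V -> V) : rel V :=
  fun x y => [exists v, ((p1 v == x) && (p2 v == y)) || ((p1 v == y) && (p2 v == x))].

Definition valid_choice (e : rel V) (p1 p2 : V -> V) : Prop :=
  forall v,
    (2 <= deg e v -> [/\ e v (p1 v), e v (p2 v) & p1 v != p2 v]) /\
    (deg e v = 1 -> e v (p1 v) /\ p1 v = p2 v).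
End Defs.

(* Main.v *)
Require Import Defs.
From mathcomp Require Import all_boot.
Set Implicit Arguments. Unset Strict Implicit.

Lemma minbig_le (V : finType) (P : pred {set V}) S0 :
  P S0 -> \big[minn/#|V|]_(S : {set V} | P S) #|S| <= #|S0|.
Proof.
move=> PS.
have : S0 \in index_enum {set V} by rewrite mem_index_enum.
elim: (index_enum {set V}) => [|a r IH] //=.
rewrite big_cons inE => /orP [/eqP <- | ir].
  by rewrite PS geq_minl.
case: (P a); last exact: IH ir.
exact: leq_trans (geq_minr _ _) (IH ir).
Qed.

Lemma minbig_ge (V : finType) (P : pred {set V}) k :
  k <= #|V| -> (forall S, P S -> k <= #|S|) ->
  k <= \big[minn/#|V|]_(S : {set V} | P S) #|S|.
Proof.
move=> hV hS; apply: (big_ind (fun x => k <= x)) => //.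
  by move=> x y hx hy; rewrite leq_min hx hy.
Qed.

Lemma indep_cover (V : finType) (h : rel V) (S : {set V}) :
  independent h S -> vertex_cover h (~: S).
Proof.
move=> /forallP hS; apply/forallP => x; apply/forallP => y; apply/implyP => hxy.
rewrite !in_setC; case xS: (x \in S) => //=; apply/negP => yS.
by move: (hS x); rewrite xS /= => /forallP /(_ y); rewrite yS hxy.
Qed.

Lemma cover_indep (V : finType) (h : rel V) (S : {set V}) :
  vertex_cover h S -> independent h (~: S).
Proof.
move=> /forallP hS; apply/forallP => x; apply/implyP; rewrite in_setC => xS.
apply/forallP => y; apply/implyP; rewrite in_setC => yS; apply/negP => hxy.
move: (hS x) => /forallP /(_ y) /implyP /(_ hxy).
by rewrite (negbTE xS) (negbTE yS).
Qed.

Theorem lemma2p1 (V : finType) (e : rel V) (p1 p2 : V -> V) :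
  simple_graph e ->
  (forall v : V, 0 < deg e v) ->
  valid_choice e p1 p2 ->
  gamma_t e <= #|V| - alpha (Gprime p1 p2) /\
  #|V| - alpha (Gprime p1 p2) = beta (Gprime p1 p2).
Proof.
move=> _ hdeg hval.
set h := Gprime p1 p2.
have i0 : independent h set0.
  by apply/forallP => x; rewrite in_set0.
have [S0 iS0 aS0] : {S0 | S0 \in (fun S => independent h S) & alpha h = #|S0|}.
  apply: eq_bigmax_cond; apply/card_gt0P; by exists set0.
have cS0 := indep_cover (iS0 : independent h S0).
have cardC : #|~: S0| = #|V| - alpha h by rewrite aS0 cardsCs setCK.
have covtd : forall C, vertex_cover h C -> total_dominating e C.
  move=> C /forallP hC; apply/forallP => v.
  move: (hval v) => [h2 h1].
  have := hdeg v; rewrite leq_eqVlt => /orP [/eqP d1 | d2].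
    have [ep eq] := h1 (esym d1).
    move: (hC (p1 v)) => /forallP /(_ (p1 v)) /implyP.
    have hl : h (p1 v) (p1 v).
      by apply/existsP; exists v; rewrite eq eqxx.
    move=> /(_ hl); rewrite orbb => inC.
    by apply/existsP; exists (p1 v); rewrite inC ep.
  have [e1 e2 _] := h2 d2.
  move: (hC (p1 v)) => /forallP /(_ (p2 v)) /implyP.
  have hl : h (p1 v) (p2 v) by apply/existsP; exists v; rewrite !eqxx.
  move=> /(_ hl) /orP [inC | inC]; apply/existsP.
    by exists (p1 v); rewrite inC e1.
  by exists (p2 v); rewrite inC e2.
split.
  by rewrite -cardC; apply: minbig_le; apply: covtd.
apply/eqP; rewrite eqn_leq; apply/andP; split.
  apply: minbig_ge; first exact: leq_subr.
  move=> C /cover_indep iC.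
  have hle : #|~: C| <= alpha h := @leq_bigmax_cond _ (independent h) (fun S : {set V} => #|S|) _ iC.
  by rewrite leq_subLR -(cardsC C) addnC leq_add2r.
by rewrite -cardC; apply: minbig_le.
Qed.
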